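(* For every $A \in S(2n,\mathbb{R})$ and every $P \in \operatorname{Sp}(2n)$, $\operatorname{Pf}(P^T A P) = \operatorname{Pf}(A)$ and $\operatorname{s}(P^T A P) = \operatorname{s}(A)$; i.e. the Pfaffian and the sum function are invariant under the action $\rho(P,A) = P^T A P$.
   Context: $S(2n,\mathbb{R}) = \{A \in M(2n,\mathbb{R}) : A^T = -A,\ \det A\neq 0\}$. $J$ is the $2n\times 2n$ block-diagonal matrix with $n$ diagonal blocks $J_0 = \begin{bmatrix} 0 & 1 \\ -1 & 0\end{bmatrix}$, and $\operatorname{Sp}(2n) = \{P\in M(2n,\mathbb{R}) : P^T J P = J\}$. $\operatorname{Pf}(A) = \frac{1}{2^n n!}\sum_{\sigma\in S_{2n}}\operatorname{sgn}(\sigma)\prod_{i=1}^n A_{\sigma(2i-1),\sigma(2i)}$, and $\operatorname{s}(A) = \sum_{i=1}^n A_{2i-1,2i}$. *)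

(* Defs.v *)
(* Real skew-symmetric matrices of size 2n, over any realFieldType
   (the paper's R; Stdlib's R is an instance). Indices are 0-based. *)
From HB Require Import structures.
From mathcomp Require Import all_boot all_order all_algebra all_fingroup.
From mathcomp Require Import zify.
Set Implicit Arguments. Unset Strict Implicit. Unset Printing Implicit Defensive.
Import Order.TTheory GRing.Theory Num.Theory.
Local Open Scope ring_scope.

Lemma ev_lt (n : nat) (i : 'I_n) : (2 * i < 2 * n)%N.
Proof. by rewrite ltn_pmul2l. Qed.

Lemma od_lt (n : nat) (i : 'I_n) : ((2 * i).+1 < 2 * n)%N.
Proof. have := ltn_ord i; lia. Qed.

(* 0-based index 2i (paper's 2i+1 - 1 with i shifted) and 2i+1 *)
Definition ev (n : nat) (i : 'I_n) : 'I_(2 * n) := Ordinal (ev_lt i).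
Definition od (n : nat) (i : 'I_n) : 'I_(2 * n) := Ordinal (od_lt i).

Definition skew_invertible (R : realFieldType) (n : nat) (A : 'M[R]_(2 * n)) : Prop :=
  A^T = - A /\ \det A != 0.

(* J = block diagonal with n blocks [[0,1],[-1,0]] *)
Definition Jmat (R : realFieldType) (n : nat) : 'M[R]_(2 * n) :=
  \matrix_(k, l)
    (if ~~ odd k && (nat_of_ord l == k.+1) then 1
     else if odd k && ((nat_of_ord l).+1 == k) then -1 else 0).

Definition symplectic (R : realFieldType) (n : nat) (P : 'M[R]_(2 * n)) : Prop :=
  P^T *m Jmat R n *m P = Jmat R n.

Definition Pf (R : realFieldType) (n : nat) (A : 'M[R]_(2 * n)) : R :=
  ((2 ^ n * n`!)%:R)^-1 *
  \sum_(s : 'S_(2 * n)) (-1) ^+ s * \prod_(i < n) A (s (ev i)) (s (od i)).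

Definition ssum (R : realFieldType) (n : nat) (A : 'M[R]_(2 * n)) : R :=
  \sum_(i < n) A (ev i) (od i).

(* Main.v *)
Require Import Defs.
From HB Require Import structures.
From mathcomp Require Import all_boot all_order all_algebra all_fingroup.
From mathcomp Require Import zify lra.
Import GRing.Theory Num.Theory.
Local Open Scope ring_scope.

Set Implicit Arguments. Unset Strict Implicit. Unset Printing Implicit Defensive.

Section Idx.
Variable n : nat.

Lemma hf_lt (k : 'I_(2 * n)) : (k %/ 2 < n)%N.
Proof. have := ltn_ord k; lia. Qed.
Definition hf (k : 'I_(2 * n)) : 'I_n := Ordinal (hf_lt k).

Lemma hf_ev i : hf (ev i) = i.
Proof. apply: val_inj => /=; lia. Qed.
Lemma hf_od i : hf (od i) = i.
Proof. apply: val_inj => /=; lia. Qed.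
Lemma ev_par i : ((ev i : 'I_(2*n)) %% 2 == 0)%N.
Proof. rewrite /=; apply/eqP; lia. Qed.
Lemma od_par i : ((od i : 'I_(2*n)) %% 2 == 0)%N = false.
Proof. rewrite /=; apply/eqP; lia. Qed.
Lemma evodE (k : 'I_(2*n)) : k = if (k %% 2 == 0)%N then ev (hf k) else od (hf k).
Proof. case: ifP => /eqP H; apply: val_inj => /=; lia. Qed.
Lemma ev_inj : injective (@ev n).
Proof. move=> a b /(congr1 val) /= H; apply: val_inj => /=; lia. Qed.
Lemma od_inj : injective (@od n).
Proof. move=> a b /(congr1 val) /= H; apply: val_inj => /=; lia. Qed.
Lemma ev_od a b : (ev a == od b :> 'I_(2*n)) = false.
Proof. apply/eqP => /(congr1 val) /= H; lia. Qed.

Lemma big_pairs (T : Type) (idx : T) (op : Monoid.com_law idx) (y : 'I_(2*n) -> T) :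
  \big[op/idx]_(k : 'I_(2*n)) y k = \big[op/idx]_(i < n) op (y (ev i)) (y (od i)).
Proof.
rewrite (partition_big hf xpredT) //; apply: eq_bigr => i _.
rewrite (bigD1 (ev i)) ?hf_ev ?eqxx //= (bigD1 (od i)) /=; last first.
  by rewrite hf_od eqxx eq_sym ev_od.
rewrite big_pred0 ?Monoid.mulm1 // => k.
apply/negP => /andP [/andP [/eqP Hk H1] H2].
move: H1 H2; rewrite (evodE k) Hk; case: ifP; rewrite eqxx //=.

Qed.
End Idx.

Section Law.
Variable R : comNzRingType.
Variable n : nat.
Local Notation m := (2 * n)%N.

Definition F (C : 'M[R]_m) : R :=
  \sum_(s : 'S_m) (-1) ^+ s * \prod_(i < n) C (s (ev i)) (s (od i)).

Lemma congr_entry (B C : 'M[R]_m) j k :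
  (B^T *m C *m B) j k = \sum_(p : 'I_m * 'I_m) (B p.1 j * C p.1 p.2 * B p.2 k).
Proof.
rewrite mxE; under eq_bigr => b _ do rewrite mxE big_distrl /=.
rewrite exchange_big pair_big /=; apply: eq_bigr => p _.
by rewrite mxE.
Qed.

Definition hmap (g : {ffun 'I_n -> 'I_m * 'I_m}) (k : 'I_m) : 'I_m :=
  if (k %% 2 == 0)%N then (g (hf k)).1 else (g (hf k)).2.
Lemma hmap_ev g i : hmap g (ev i) = (g i).1.
Proof. by rewrite /hmap ev_par hf_ev. Qed.
Lemma hmap_od g i : hmap g (od i) = (g i).2.
Proof. by rewrite /hmap od_par hf_od. Qed.

Definition phi (s : 'S_m) : {ffun 'I_n -> 'I_m * 'I_m} :=
  [ffun i => (s (ev i), s (od i))].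

Lemma hmap_phi s : hmap (phi s) =1 s.
Proof. by move=> k; rewrite /hmap !ffunE /= [in RHS](evodE k); case: ifP. Qed.

Lemma phi_inj : injective phi.
Proof.
move=> s1 s2 E; apply/permP => k.
by rewrite -!hmap_phi E.
Qed.

Lemma law (B C : 'M[R]_m) : F (B^T *m C *m B) = \det B * F C.
Proof.
rewrite /F.
transitivity (\sum_(s : 'S_m) \sum_(g : {ffun 'I_n -> 'I_m * 'I_m}) (-1)^+s *
   \prod_(i<n) (B (g i).1 (s (ev i)) * C (g i).1 (g i).2 * B (g i).2 (s (od i)))).
  apply: eq_bigr => s _; rewrite -mulr_sumr; congr (_ * _).
  under eq_bigr => i _ do rewrite congr_entry.
  by rewrite bigA_distr_bigA.
rewrite exchange_big /=.
transitivity (\sum_(g : {ffun 'I_n -> 'I_m * 'I_m})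
   (\prod_(i<n) C (g i).1 (g i).2) * \det (rowsub (hmap g) B)).
  apply: eq_bigr => g _.
  rewrite /determinant mulr_sumr; apply: eq_bigr => s _.
  rewrite (big_pairs _ (fun k => rowsub (hmap g) B k (s k))).
  rewrite mulrCA; congr (_ * _); rewrite -big_split /=; apply: eq_bigr => i _.
  by rewrite !mxE hmap_ev hmap_od mulrAC mulrC.
rewrite (bigID (mem (phi @: setT))) /= [X in _ + X]big1 ?addr0; last first.
  move=> g Hg; suff -> : \det (rowsub (hmap g) B) = 0 by rewrite mulr0.
  have : ~~ injectiveb (hmap g).
    apply/negP => /injectiveP inj; move/negP: Hg; apply; apply/imsetP.
    exists (perm inj); first by [].
    apply/ffunP => i; rewrite ffunE !permE hmap_ev hmap_od; by case: (g i).
  case/injectivePn => x [y nxy exy].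
  by apply: (determinant_alternate nxy) => j; rewrite !mxE exy.
rewrite big_imset /=; last by move=> x y _ _; apply: phi_inj.
rewrite mulr_sumr; apply: eq_big => [s|s _]; first by rewrite inE.
have -> : rowsub (hmap (phi s)) B = row_perm s B.
  by apply/matrixP => i j; rewrite !mxE hmap_phi.
rewrite row_permE det_mulmx det_perm.
under eq_bigr => i _ do rewrite ffunE /=.
by rewrite mulrC mulrCA mulrA.
Qed.
End Law.

Section Lift.
Variable n : nat.
Local Notation m := (2 * n)%N.

Lemma evodC (P : 'I_m -> Prop) :
  (forall i, P (ev i)) -> (forall i, P (od i)) -> forall k, P k.
Proof. by move=> He Ho k; rewrite (evodE k); case: ifP. Qed.

Definition Lf (t : 'S_n) (k : 'I_m) : 'I_m :=
  if (k %% 2 == 0)%N then ev (t (hf k)) else od (t (hf k)).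
Lemma Lf_ev t i : Lf t (ev i) = ev (t i).
Proof. by rewrite /Lf ev_par hf_ev. Qed.
Lemma Lf_od t i : Lf t (od i) = od (t i).
Proof. by rewrite /Lf od_par hf_od. Qed.

Lemma Lf_inj t : injective (Lf t).
Proof.
elim/evodC => a; elim/evodC => b; rewrite ?Lf_ev ?Lf_od.
- by move/ev_inj/perm_inj ->.
- by move/eqP; rewrite ev_od.
- by move/eqP; rewrite eq_sym ev_od.
- by move/od_inj/perm_inj ->.
Qed.

Definition L t : 'S_m := perm (@Lf_inj t).

Lemma L_ev t i : L t (ev i) = ev (t i).
Proof. by rewrite permE Lf_ev. Qed.
Lemma L_od t i : L t (od i) = od (t i).
Proof. by rewrite permE Lf_od. Qed.

Lemma L_mul s t : L (s * t)%g = (L s * L t)%g.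
Proof.
apply/permP; elim/evodC => i; rewrite permM.
- by rewrite !L_ev permM.
- by rewrite !L_od permM.
Qed.

Lemma L1 : L 1%g = 1%g.
Proof. by apply/permP; elim/evodC => i; rewrite perm1 ?L_ev ?L_od perm1. Qed.

Lemma L_tperm a b : L (tperm a b) = (tperm (ev a) (ev b) * tperm (od a) (od b))%g.
Proof.
apply/permP; elim/evodC => i; rewrite permM.
- rewrite L_ev -inj_tperm; last exact: ev_inj.
  have H1 x y : (od x != ev y :> 'I_m) by rewrite eq_sym ev_od.
  by rewrite (@tpermD _ (od a)) ?H1.
- rewrite L_od (@tpermD _ (ev a)) ?ev_od // -inj_tperm //; exact: od_inj.
Qed.

Lemma L_odd t : odd_perm (L t) = false.
Proof.
case: (prod_tpermP t) => ts -> _; elim: ts => [|u ts IH].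
  by rewrite big_nil L1 odd_perm1.
rewrite big_cons L_mul odd_permM IH L_tperm odd_permM !odd_tperm.
by rewrite (inj_eq (@ev_inj n)) (inj_eq (@od_inj n)) addbb.
Qed.
End Lift.

Section FJ.
Variable R : realFieldType.
Variable n : nat.
Local Notation m := (2 * n)%N.
Local Notation J := (Jmat R n).

Lemma J_ev i k : J (ev i) k = (k == od i)%:R.
Proof.
rewrite mxE /= oddM /=.
have -> : (k == od i) = (nat_of_ord k == (2 * i).+1) by [].
by case: eqP.
Qed.

Lemma J_od i k : J (od i) k = - (k == ev i)%:R.
Proof.
rewrite mxE /= oddM /= eqSS.
have -> : (k == ev i) = (nat_of_ord k == (2 * i)%N) by [].
by case: eqP => _; rewrite ?mulr0n ?oppr0.
Qed.

Lemma Jnz_ev j b : J (ev j) b != 0 -> b = od j.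
Proof. by rewrite J_ev; case: (b =P od j) => // _; rewrite mulr0n eqxx. Qed.
Lemma Jnz_od j b : J (od j) b != 0 -> b = ev j.
Proof. by rewrite J_od; case: (b =P ev j) => // _; rewrite mulr0n oppr0 eqxx. Qed.

Local Notation pr s := (\prod_(i < n) J (s (ev i)) (s (od i))).
Definition bs (s : 'S_m) := [set i : 'I_n | ~~ (s (ev i) %% 2 == 0)%N].

Lemma prod_nz (s : 'S_m) i : pr s != 0 -> J (s (ev i)) (s (od i)) != 0.
Proof.
move=> H; apply/negP => /eqP H0; move/negP: H; apply.
by rewrite (bigD1 i) //= H0 mul0r.
Qed.

Lemma base (s : 'S_m) : bs s = set0 -> pr s != 0 -> (-1) ^+ s * pr s = 1.
Proof.
move=> H0 Hnz.
have Hev i : s (ev i) = ev (hf (s (ev i))).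
  have : i \notin bs s by rewrite H0 inE.
  rewrite inE negbK => Hp.
  by rewrite {1}(evodE (s (ev i))) Hp.
have Hod i : s (od i) = od (hf (s (ev i))).
  by apply: Jnz_ev; rewrite -Hev; exact: prod_nz.
have tinj : injective (fun i => hf (s (ev i))).
  move=> a b /= E; apply: ev_inj; apply: (@perm_inj _ s).
  by rewrite (Hev a) (Hev b) E.
have -> : s = L (perm tinj).
  apply/permP; elim/evodC => i; rewrite ?L_ev ?L_od permE /=; [exact: Hev | exact: Hod].
rewrite L_odd expr0 mul1r big1 // => i _.
by rewrite L_ev L_od J_ev eqxx.
Qed.

Lemma term_one k : forall s : 'S_m, (#|bs s| <= k)%N -> pr s != 0 -> (-1) ^+ s * pr s = 1.
Proof.
elim: k => [|k IH] s Hc Hnz.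
  by apply: base => //; apply/eqP; rewrite -cards_eq0 -leqn0.
have [H0|] := eqVneq (bs s) set0; first exact: base.
case/set0Pn => i; rewrite inE => Hi.
set j := hf (s (ev i)).
have Hsi : s (ev i) = od j by rewrite {1}(evodE (s (ev i))) (negbTE Hi).
have Hso : s (od i) = ev j by apply: Jnz_od; rewrite -Hsi; exact: prod_nz.
set s' := (tperm (ev i) (od i) * s)%g.
have Hs' x : s' x = s (tperm (ev i) (od i) x) by rewrite permM.
have Hoth l : l != i -> s' (ev l) = s (ev l) /\ s' (od l) = s (od l).
  move=> nl; rewrite !Hs'; split; congr (s _); apply: tpermD.
  - by rewrite (inj_eq (@ev_inj n)) eq_sym.
  - by rewrite eq_sym ev_od.
  - by rewrite ev_od.
  - by rewrite (inj_eq (@od_inj n)) eq_sym.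
have Hpr : pr s' = - pr s.
  rewrite (bigD1 i) //= [in RHS](bigD1 i) //=.
  rewrite (Hs' (ev i)) (Hs' (od i)) tpermL tpermR Hso Hsi J_ev J_od !eqxx.
  rewrite mulr1n mulNr mul1r opprK mul1r.
  by apply: eq_bigr => l nl; have [-> ->] := Hoth l nl.
have Hnz' : pr s' != 0 by rewrite Hpr oppr_eq0.
have Hc' : (#|bs s'| <= k)%N.
  have sub : bs s' \subset bs s :\ i.
    apply/subsetP => l; rewrite !inE.
    have [->|nl] := eqVneq l i.
      by rewrite Hs' tpermL Hso ev_par.
    by have [-> _] := Hoth l nl; move=> ->.
  have := subset_leq_card sub.
  rewrite (cardsD1 i) (_ : i \in bs s) in Hc; last by rewrite inE.
  move: Hc => /=; lia.
have := IH s' Hc' Hnz'.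
rewrite Hpr /s' odd_permM odd_tperm ev_od addTb.
move=> H; rewrite -[RHS]H.
by rewrite signrN mulNr mulrN opprK.
Qed.

Lemma FJ_pos : 0 < F J.
Proof.
rewrite /F (bigD1 1%g) //= odd_perm1 expr0 mul1r.
rewrite big1; last by move=> i _; rewrite !perm1 J_ev eqxx.
have HS : 0 <= \sum_(s : 'S_m | s != 1%g) (-1) ^+ s * pr s.
  apply: sumr_ge0 => s _.
  have [->|nz] := eqVneq (pr s) 0; first by rewrite mulr0.
  by rewrite (@term_one #|bs s|).
lra.
Qed.
End FJ.

Section Main.
Variable R : realFieldType.
Variable n : nat.
Local Notation m := (2 * n)%N.
Local Notation J := (Jmat R n).

Lemma JJ : J *m J = - 1%:M.
Proof.
apply/matrixP; elim/evodC => i k; rewrite !mxE.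
- rewrite (bigD1 (od i)) //= big1 ?addr0 => [|l nl]; last by rewrite J_ev (negbTE nl) mul0r.
  by rewrite J_ev eqxx mul1r J_od eq_sym.
- rewrite (bigD1 (ev i)) //= big1 ?addr0 => [|l nl]; last by rewrite J_od (negbTE nl) oppr0 mul0r.
  by rewrite J_od eqxx J_ev mulN1r eq_sym.
Qed.

Lemma trJ (X : 'M[R]_m) :
  \tr (J *m X) = \sum_(i < n) (X (od i) (ev i) - X (ev i) (od i)).
Proof.
rewrite /mxtrace (big_pairs _ (fun k => (J *m X) k k)) /=; apply: eq_bigr => i _.
rewrite !mxE (bigD1 (od i)) //= big1 ?addr0 => [|l nl]; last by rewrite J_ev (negbTE nl) mul0r.
rewrite (bigD1 (ev i)) //= [X in _ + (_ + X)]big1 ?addr0 => [|l nl]; last by rewrite J_od (negbTE nl) oppr0 mul0r.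
by rewrite J_ev J_od !eqxx mul1r mulN1r.
Qed.

Lemma trJ_skew (X : 'M[R]_m) : X^T = - X -> \tr (J *m X) = - (ssum X *+ 2).
Proof.
move=> HX; rewrite trJ /ssum -sumrMnl -sumrN; apply: eq_bigr => i _.
have -> : X (od i) (ev i) = - X (ev i) (od i).
  by have := congr1 (fun M : 'M[R]_m => M (ev i) (od i)) HX; rewrite !mxE.
by rewrite mulr2n opprD.
Qed.

Lemma sympl_T (P : 'M[R]_m) : P^T *m J *m P = J -> P *m J *m P^T = J.
Proof.
move=> HP.
have h1 : (- (J *m P^T *m J)) *m P = 1%:M.
  by rewrite mulNmx -!mulmxA (mulmxA P^T) HP JJ opprK.
have h2 := mulmx1C h1.
have h3 : P *m J *m P^T *m J = - 1%:M by rewrite -h2 mulmxN opprK !mulmxA.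
have e : P *m J *m P^T *m J *m J = - (P *m J *m P^T) by rewrite -mulmxA JJ mulmxN mulmx1.
by move: e; rewrite h3 mulNmx mul1mx => /oppr_inj.
Qed.

Lemma detP (P : 'M[R]_m) : P^T *m J *m P = J -> \det P = 1.
Proof.
move=> HP; have E := law P J; rewrite HP in E.
have : (\det P - 1) * F J = 0 by rewrite mulrBl -E mul1r subrr.
move/eqP; rewrite mulf_eq0 (negbTE (lt0r_neq0 (FJ_pos R n))) orbF subr_eq0.
by move/eqP.
Qed.
End Main.

Unset Implicit Arguments.
Theorem theorem2p7 (R : realFieldType) (n : nat) (A P : 'M[R]_(2 * n)) :
  skew_invertible A -> symplectic P ->
  Pf (P^T *m A *m P) = Pf A /\ ssum (P^T *m A *m P) = ssum A.
Proof.
move=> [HA _] HP; split.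
  have PfF (X : 'M[R]_(2 * n)) : Pf X = ((2 ^ n * n`!)%N%:R)^-1 * F X by [].
  by rewrite !PfF law detP // mul1r.
have Hs : (P^T *m A *m P)^T = - (P^T *m A *m P).
  by rewrite !trmx_mul trmxK HA mulNmx mulmxN mulmxA.
have : \tr (Jmat R n *m (P^T *m A *m P)) = \tr (Jmat R n *m A).
  rewrite !mulmxA mxtrace_mulC !mulmxA (sympl_T HP) //.
rewrite (trJ_skew Hs) (trJ_skew HA) !mulr2n => H.
lra.
Qed.
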